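(* Let $\mathcal D$ be a distribution over $\mathcal X\times\{A,B\}\times\{0,1\}$, $\alpha\in[0,1)$, $\mathcal Q$ any distribution over $\mathcal X\times\{A,B\}\times\{0,1\}$, and $\widetilde{\mathcal D}=(1-\alpha)\mathcal D+\alpha\mathcal Q$. Let $h$ be a fixed hypothesis in a hypothesis class $\mathcal H$ of group-aware hypotheses $\mathcal X\times\{A,B\}\to\{0,1\}$, and fix a group $A$ with $r_A^+:=\Pr_{\mathcal D}[y=1\wedge x\in A]>0$. Then $$\big|\mathrm{TPR}_A(h,\widetilde{\mathcal D})-\mathrm{TPR}_A(h,\mathcal D)\big|\le\frac{\alpha}{(1-\alpha)r_A^++\alpha},$$ where $\mathrm{TPR}_A(h,\mathcal D')=\Pr_{\mathcal D'}[h(x)=1\mid y=1,\ x\in A]$.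
   Context: Examples are triples (features $x$, group in $\{A,B\}$, label $y$); $\widetilde{\mathcal D}$ models malicious noise in which an $\alpha$ fraction of samples comes from an adversarial distribution $\mathcal Q$. *)

(* Defs.v *)
From mathcomp Require Import all_boot all_order all_algebra.
From mathcomp Require Import all_classical all_reals all_analysis.
Set Implicit Arguments. Unset Strict Implicit. Unset Printing Implicit Defensive.
Import Order.TTheory GRing.Theory Num.Theory.
Local Open Scope classical_set_scope.
Local Open Scope ring_scope.

(* Examples are triples ((x, g), y) : X * bool * bool.
   Group encoding: g = true stands for group A, g = false for group B.
   Label y : bool, true = 1, false = 0. *)

Definition pos_event (X : Type) (g : bool) : set (X * bool * bool) :=
  [set z | (z.1.2 == g) && z.2].

Definition tp_event (X : Type) (h : X -> bool -> bool) (g : bool)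
  : set (X * bool * bool) :=
  [set z | [&& h z.1.1 z.1.2, z.1.2 == g & z.2]].

Definition TPR (d : measure_display) (X : measurableType d) (R : realType)
  (P : probability (X * bool * bool)%type R) (h : X -> bool -> bool) (g : bool) : R :=
  fine (P (tp_event h g)) / fine (P (pos_event g)).

(* Main.v *)
Require Import Defs.
Set Warnings "-all".
From mathcomp Require Import all_boot all_order all_algebra.
From mathcomp Require Import all_classical all_reals all_analysis.
From mathcomp Require Import ring lra.
Import Order.TTheory GRing.Theory Num.Theory.
Local Open Scope classical_set_scope.
Local Open Scope ring_scope.

Lemma key (R : realType) (a p t q s : R) :
  0 <= a -> a < 1 -> 0 < p -> 0 <= t -> t <= p -> 0 <= s -> s <= q -> q <= 1 ->
  `| ((1 - a) * t + a * s) / ((1 - a) * p + a * q) - t / p | <=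
    a / ((1 - a) * p + a).
Proof.
move=> a0 a1 p0 t0 tp s0 sq q1.
have P'0 : 0 < (1 - a) * p + a * q by nra.
have P0 : 0 < (1 - a) * p + a by nra.
have -> : ((1 - a) * t + a * s) / ((1 - a) * p + a * q) - t / p =
  a * (p * s - t * q) / (p * ((1 - a) * p + a * q)).
  field; apply/andP; split; rewrite gt_eqF //.
have D0 : 0 < p * ((1 - a) * p + a * q) by nra.
rewrite !normrM normfV (ger0_norm a0) (gtr0_norm D0).
rewrite ler_pdivlMr; last by nra.
rewrite mulrAC ler_pdivrMr //.
have h1 : `|p * s - t * q| <= p * q.
  rewrite ler_norml; apply/andP; split; nra.
have h2 : 0 <= `|p * s - t * q| by [].
move: h1 h2; set x := `|_|; move=> h1 h2.
have h3 : x * ((1 - a) * p + a) <= p * q * ((1 - a) * p + a) by rewrite ler_wpM2r // ltW.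
have h4 : p * q * ((1 - a) * p + a) <= p * ((1 - a) * p + a * q).
  have : 0 <= p * p * (1 - a) * (1 - q) by apply: mulr_ge0; [apply: mulr_ge0; nra|lra].
  nra.
rewrite -mulrA; apply: ler_wpM2l => //; exact: le_trans h3 h4.
Qed.

Lemma pos_m (d : measure_display) (X : measurableType d) g :
  measurable (@pos_event X g).
Proof.
have -> : pos_event g = ([set: X] `*` [set g]) `*` [set true].
  rewrite /pos_event; apply/funext => -[[x b] y] /=; apply/propext; split.
    by case/andP => /eqP -> ->.
  by case=> [[_ ->] ->]; rewrite eqxx.
apply: measurableX => //; apply: measurableX => //.
Qed.

Lemma tp_m (d : measure_display) (X : measurableType d) (h : X -> bool -> bool) g :
  measurable_fun setT (fun xg : X * bool => h xg.1 xg.2) ->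
  measurable (tp_event h g).
Proof.
move=> mh.
have -> : tp_event h g = ((setT `&` (fun xg : X * bool => h xg.1 xg.2) @^-1` [set true]) `&` ([set: X] `*` [set g])) `*` [set true].
  apply/funext => -[[x b] y]; rewrite /tp_event /=; apply/propext; split.
    by case/and3P => -> /eqP -> ->.
  by case=> [[[_ ->] [_ ->]] ->]; rewrite eqxx.
apply: measurableX => //; apply: measurableI; first exact: mh.
exact: measurableX.
Qed.

Lemma probE (d : measure_display) (T : measurableType d) (R : realType)
  (P : probability T R) A : measurable A ->
  P A = (fine (P A))%:E /\ 0 <= fine (P A) <= 1.
Proof.
move=> mA; have le1 := probability_le1 P mA.
have ge0 : (0 <= P A)%E by [].
have fin : P A \is a fin_num by rewrite ge0_fin_numE // (le_lt_trans le1 (ltry 1)).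
split; first by rewrite fineK.
by rewrite fine_ge0 //= -lee_fin fineK.
Qed.

Arguments probE {d T R} P {A}.

Theorem mainTheorem6 (d : measure_display) (X : measurableType d) (R : realType)
  (D Q Dt : probability (X * bool * bool)%type R) (alpha : R)
  (H : set (X -> bool -> bool)) (h : X -> bool -> bool) (g : bool) :
  0 <= alpha -> alpha < 1 ->
  (forall E, measurable E ->
     Dt E = ((1 - alpha)%:E * D E + alpha%:E * Q E)%E) ->
  h \in H ->
  measurable_fun setT (fun xg : X * bool => h xg.1 xg.2) ->
  0 < fine (D (pos_event g)) ->
  `| TPR Dt h g - TPR D h g | <=
    alpha / ((1 - alpha) * fine (D (pos_event g)) + alpha).
Proof.
move=> a0 a1 HDt _ mh p0.
have mP := @pos_m d X g; have mT := @tp_m d X h g mh.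
have sub : tp_event h g `<=` pos_event g.
  by move=> [[x b] y]; rewrite /tp_event /pos_event /= => /and3P[_ -> ->].
have [Dp /andP[_ _]] := probE D mP.
have [Dtt /andP[t0 _]] := probE D mT.
have [Qp /andP[_ q1]] := probE Q mP.
have [Qt /andP[s0 _]] := probE Q mT.
have tp : fine (D (tp_event h g)) <= fine (D (pos_event g)).
  rewrite -lee_fin -Dtt -Dp; apply: le_measure => //; rewrite inE //.
have sq : fine (Q (tp_event h g)) <= fine (Q (pos_event g)).
  rewrite -lee_fin -Qt -Qp; apply: le_measure => //; rewrite inE //.
rewrite /TPR (HDt _ mP) (HDt _ mT) Dp Dtt Qp Qt -!EFinM -!EFinD /=.
exact: key.
Qed.
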